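(* Let $\mathsf{F},\mathsf{B}:\mathbf{Set}\to\mathbf{Set}$ be functors and let $(X,f)$ be an $(\mathsf{F},\mathsf{B})$-dialgebra whose bisimilarity quotient $(Q,q)$ exists, with canonical map $z:(X,f)\to(Q,q)$. Then for all $x,y\in X$, $x\sim_f y$ if and only if $z(x)=z(y)$. Consequently $\sim_f$ is an equivalence relation on $X$.
   Context: For functors $\mathsf{F},\mathsf{B}:\mathbf{Set}\to\mathbf{Set}$, an $(\mathsf{F},\mathsf{B})$-dialgebra is a pair $(X,f)$ with $X$ a set (the carrier) and $f:\mathsf{F}X\to\mathsf{B}X$ a function. A homomorphism $h:(X,f)\to(Y,g)$ is a function $h:X\to Y$ with $g\circ\mathsf{F}h=\mathsf{B}h\circ f$. Dialgebras and homomorphisms form the category $\mathit{Dialg}(\mathsf{F},\mathsf{B})$. Dialgebraic bisimilarity $\sim_f\subseteq X\times X$ on $(X,f)$ is defined by $x\sim_f y$ iff there exist a dialgebra $(Y,g)$ and a homomorphism $h:(X,f)\to(Y,g)$ with $h(x)=h(y)$. A quotient of an object $A$ in a category is a chosen representative of an equivalence class of epimorphisms out of $A$, where $e:A\to B$ and $e':A\to C$ are equivalent iff there is an isomorphism $i:B\to C$ with $i\circ e=e'$. The bisimilarity quotient of $(X,f)$ is the wide pushout $(Q,q)$ in $\mathit{Dialg}(\mathsf{F},\mathsf{B})$ (if it exists) of the family of all quotients of $(X,f)$ in $\mathit{Dialg}(\mathsf{F},\mathsf{B})$; the induced diagonal morphism $z:(X,f)\to(Q,q)$ is called the canonical map.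 *)

(* Defs.v *)
From Stdlib Require Import RelationClasses.

Record functor := Functor {
  fobj :> Type -> Type;
  fmap : forall (A B : Type), (A -> B) -> fobj A -> fobj B;
  fmap_id : forall (A : Type) (a : fobj A), fmap A A (fun x => x) a = a;
  fmap_comp : forall (A B C : Type) (g : B -> C) (h : A -> B) (a : fobj A),
      fmap A C (fun x => g (h x)) a = fmap B C g (fmap A B h a)
}.
Arguments fmap _ {A B} _ _.

Record dialg (F B : functor) := Dialg {
  car : Type;
  str : F car -> B car
}.
Arguments car {F B} _.
Arguments str {F B} _ _.

Section DialgCat.
Variables F B : functor.

Definition is_hom (D E : dialg F B) (h : car D -> car E) : Prop :=
  forall a : F (car D), str E (fmap F h a) = fmap B h (str D a).

Definition is_epi (D E : dialg F B) (h : car D -> car E) : Prop :=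
  is_hom D E h /\
  forall (W : dialg F B) (u v : car E -> car W),
    is_hom E W u -> is_hom E W v ->
    (forall x, u (h x) = v (h x)) -> forall y, u y = v y.

Definition is_iso (D E : dialg F B) (i : car D -> car E) : Prop :=
  is_hom D E i /\
  exists j : car E -> car D, is_hom E D j /\
    (forall x, j (i x) = x) /\ (forall y, i (j y) = y).

Definition epi_equiv (A Y1 Y2 : dialg F B)
    (e1 : car A -> car Y1) (e2 : car A -> car Y2) : Prop :=
  exists i : car Y1 -> car Y2, is_iso Y1 Y2 i /\ forall x, i (e1 x) = e2 x.

(** [e : forall i, A -> C i] is the family of all quotients of [A]: a system of
    representatives (one per equivalence class) of the epimorphisms out of [A]. *)
Definition quotient_family (A : dialg F B) (I : Type) (C : I -> dialg F B)
    (e : forall i, car A -> car (C i)) : Prop :=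
  (forall i, is_epi A (C i) (e i)) /\
  (forall (Y : dialg F B) (h : car A -> car Y), is_epi A Y h ->
      exists i, epi_equiv A (C i) Y (e i) h) /\
  (forall i j, epi_equiv A (C i) (C j) (e i) (e j) -> i = j).

Definition wide_pushout (A : dialg F B) (I : Type) (C : I -> dialg F B)
    (e : forall i, car A -> car (C i))
    (Q : dialg F B) (z : car A -> car Q) (p : forall i, car (C i) -> car Q) : Prop :=
  is_hom A Q z /\
  (forall i, is_hom (C i) Q (p i)) /\
  (forall i x, p i (e i x) = z x) /\
  (forall (Q' : dialg F B) (z' : car A -> car Q') (p' : forall i, car (C i) -> car Q'),
      is_hom A Q' z' -> (forall i, is_hom (C i) Q' (p' i)) ->
      (forall i x, p' i (e i x) = z' x) ->
      (exists u : car Q -> car Q', is_hom Q Q' u /\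
          (forall x, u (z x) = z' x) /\ (forall i y, u (p i y) = p' i y)) /\
      (forall u1 u2 : car Q -> car Q', is_hom Q Q' u1 -> is_hom Q Q' u2 ->
          (forall x, u1 (z x) = z' x) -> (forall i y, u1 (p i y) = p' i y) ->
          (forall x, u2 (z x) = z' x) -> (forall i y, u2 (p i y) = p' i y) ->
          forall q, u1 q = u2 q)).

Definition bisim (D : dialg F B) (x y : car D) : Prop :=
  exists (E : dialg F B) (h : car D -> car E), is_hom D E h /\ h x = h y.

End DialgCat.
Arguments is_hom {F B} D E h.
Arguments is_epi {F B} D E h.
Arguments quotient_family {F B} A I C e.
Arguments wide_pushout {F B} A I C e Q z p.
Arguments bisim {F B} D x y.

(* Main.v *)
Require Import Defs.
From Stdlib Require Import RelationClasses ClassicalEpsilon FunctionalExtensionality ProofIrrelevance.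

Section Img.
Variables (F B : functor) (D E : dialg F B) (h : car D -> car E).
Hypothesis hh : is_hom D E h.
Variable x0 : car D.

Definition Im := {b : car E | exists d, h d = b}.
Definition eh (d : car D) : Im := exist _ (h d) (ex_intro _ d eq_refl).
Definition sec (w : Im) : car D := proj1_sig (constructive_indefinite_description _ (proj2_sig w)).
Lemma h_sec w : h (sec w) = proj1_sig w.
Proof. unfold sec. destruct (constructive_indefinite_description _ _). simpl. auto. Qed.
Lemma eh_sec w : eh (sec w) = w.
Proof. apply eq_sig_hprop. intros; apply proof_irrelevance. simpl. apply h_sec. Qed.

Definition retr (y : car E) : Im :=
  match excluded_middle_informative (exists d, h d = y) with
  | left H => exist _ y H
  | right _ => eh x0 end.
Lemma retr_m w : retr (proj1_sig w) = w.
Proof. destruct w as [b pb]. unfold retr; simpl.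
  destruct (excluded_middle_informative _) as [H|H]. f_equal; apply proof_irrelevance.
  contradiction. Qed.

Lemma Bm_inj (b1 b2 : B Im) : fmap B (@proj1_sig _ _) b1 = fmap B (@proj1_sig _ _) b2 -> b1 = b2.
Proof. intro H.
  assert (Hf : (fun x : Im => x) = fun x => retr (proj1_sig x)).
  { apply functional_extensionality; intro; now rewrite retr_m. }
  assert (K : forall b : B Im, b = fmap B retr (fmap B (@proj1_sig _ _) b)).
  { intro b. rewrite <- (fmap_comp B _ _ _ retr (@proj1_sig _ _) b). rewrite <- (fmap_id B _ b) at 1. f_equal. exact Hf. }
  rewrite (K b1), (K b2), H. reflexivity. Qed.

Definition ImD : dialg F B := Dialg F B Im (fun a => fmap B eh (str D (fmap F sec a))).

Lemma eh_hom : is_hom D ImD eh.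
Proof. intro a0. simpl. apply Bm_inj.
  rewrite <- !fmap_comp. simpl. change (fun x => h x) with h.
  rewrite <- !hh. f_equal. rewrite <- fmap_comp.
  f_equal. apply functional_extensionality; intro x. rewrite h_sec. reflexivity. Qed.

Lemma eh_epi : is_epi D ImD eh.
Proof. split. apply eh_hom. intros W u v _ _ Huv y. rewrite <- (eh_sec y). apply Huv. Qed.
End Img.

Theorem proposition2 (F B : functor) (D : dialg F B)
    (I : Type) (C : I -> dialg F B) (e : forall i, car D -> car (C i))
    (HquotFam : quotient_family D I C e)
    (Q : dialg F B) (z : car D -> car Q) (p : forall i, car (C i) -> car Q)
    (Hpushout : wide_pushout D I C e Q z p) :
  (forall x y : car D, bisim D x y <-> z x = z y) /\ Equivalence (bisim D).
Proof.
  destruct HquotFam as [_ [Hall _]].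
  destruct Hpushout as [Hz [_ [Hpe _]]].
  assert (M : forall x y : car D, bisim D x y <-> z x = z y).
  { intros x y; split.
    - intros [E [h [hh hxy]]].
      destruct (Hall _ _ (eh_epi F B D E h hh x)) as [i [j [[_ [k [_ [Hk _]]]] Hj]]].
      rewrite <- (Hpe i x), <- (Hpe i y). f_equal.
      rewrite <- (Hk (e i x)), <- (Hk (e i y)), !Hj. f_equal.
      unfold eh. apply eq_sig_hprop. intros; apply proof_irrelevance. exact hxy.
    - intro H. exists Q, z. auto. }
  split; [exact M|]. split.
  - intro x. apply M. reflexivity.
  - intros x y H. apply M. symmetry. apply M. exact H.
  - intros x y w H1 H2. apply M. apply M in H1. apply M in H2. congruence.
Qed.
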